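(* Let $(X,d)$ be a bounded metric space and $\lambda\ge0$. Let $\ell,k:X\to[0,+\infty)$ be lower semicontinuous functions with $\inf_X\ell=\inf_Xk=0$, and let $u,v:X\to\mathbb{R}$ be the Perron solutions of $(\mathcal{G}_\lambda)$ associated with $\ell$ and $k$, respectively. Then for every $\rho>0$, \[v(x)-u(x)\le(\rho+\|k-\ell\|_\infty)\,\mathrm{diam}(X)+\|k-\ell\|_\infty\frac{u(x)}{\rho}\quad\text{for all }x\in X.\]
   Context: $\mathrm{diam}(X)=\sup\{d(x,y):x,y\in X\}$; $\|f\|_\infty=\sup_X|f|$. Global slope: $G[u](x)=\sup_{y\neq x}\frac{(u(x)-u(y))_+}{d(x,y)}$ if $u(x)<+\infty$, $G[u](x)=+\infty$ otherwise. A solution of $(\mathcal{G}_\lambda)$ with data $\ell$ is a lower semicontinuous $u$ with $\inf_Xu=0$ and $\lambda u+G[u]=\ell$ on $X$; the Perron solution is the solution that is pointwise maximal among all solutions. *)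

(* Defs.v *)
From HB Require Import structures.
From mathcomp Require Import all_boot all_order all_algebra.
From mathcomp Require Import all_classical all_reals ereal.
Set Implicit Arguments. Unset Strict Implicit. Unset Printing Implicit Defensive.
Import Order.TTheory GRing.Theory Num.Theory.
Local Open Scope classical_set_scope.
Local Open Scope ring_scope.

Definition is_metric (R : realType) (T : Type) (d : T -> T -> R) : Prop :=
  (forall x y, 0 <= d x y) /\
  (forall x y, d x y = 0 <-> x = y) /\
  (forall x y, d x y = d y x) /\
  (forall x y z, d x z <= d x y + d y z).

Definition diam (R : realType) (T : Type) (d : T -> T -> R) : \bar R :=
  ereal_sup [set (d p.1 p.2)%:E | p in [set: T * T]].

Definition sup_norm (R : realType) (T : Type) (f : T -> R) : \bar R :=
  ereal_sup [set `|f x|%:E | x in [set: T]].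

Definition einf (R : realType) (T : Type) (f : T -> R) : \bar R :=
  ereal_inf [set (f x)%:E | x in [set: T]].

Definition lsc (R : realType) (T : Type) (d : T -> T -> R) (f : T -> R) : Prop :=
  forall x (e : R), 0 < e -> exists2 delta : R, 0 < delta &
    forall y, d x y < delta -> f x - e < f y.

(* The value 0 is added to the set so that
   the supremum over an empty index set (X = {x}) is 0 rather than -oo; this
   does not change anything otherwise since all terms are >= 0. *)
Definition global_slope (R : realType) (T : Type) (d : T -> T -> R)
    (u : T -> R) (x : T) : \bar R :=
  ereal_sup (0%E |` [set ((Num.max (u x - u y) 0) / d x y)%:E | y in ~` [set x]]).

Definition is_solution (R : realType) (T : Type) (d : T -> T -> R)
    (lam : R) (l u : T -> R) : Prop :=
  lsc d u /\ einf u = 0%E /\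
  forall x, ((lam * u x)%:E + global_slope d u x)%E = (l x)%:E.

Definition is_perron_solution (R : realType) (T : Type) (d : T -> T -> R)
    (lam : R) (l u : T -> R) : Prop :=
  is_solution d lam l u /\
  forall w, is_solution d lam l w -> forall x, w x <= u x.

(* Main.v *)
Require Import Defs.
From HB Require Import structures.
From mathcomp Require Import all_boot all_order all_algebra.
From mathcomp Require Import all_classical all_reals ereal.
From mathcomp Require Import lra ring.
Import Order.TTheory GRing.Theory Num.Theory.
Set Implicit Arguments. Unset Strict Implicit. Unset Printing Implicit Defensive.
Local Open Scope classical_set_scope.
Local Open Scope ring_scope.

Section Basics.
Variables (R : realType) (T : Type) (d : T -> T -> R).
Hypothesis dm : is_metric d.

Lemma d_ge0 x y : 0 <= d x y. Proof. by case: dm. Qed.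
Lemma d_xx x : d x x = 0. Proof. by case: dm => _ [h _]; apply/h. Qed.
Lemma d_gt0 x y : y <> x -> 0 < d x y.
Proof.
move=> hyx; rewrite lt_neqAle d_ge0 andbT; apply/eqP => h.
case: dm => _ [hd _]; by apply: hyx; symmetry; apply/hd.
Qed.
Lemma d_sym x y : d x y = d y x. Proof. by case: dm => _ [_ []]. Qed.
Lemma d_tri x y z : d x z <= d x y + d y z. Proof. by case: dm => _ [_ []]. Qed.

Lemma gs_ge0 u x : (0 <= global_slope d u x)%E.
Proof. by apply: ereal_sup_ubound; left. Qed.

Lemma gs_le u x c : 0 <= c -> (forall y, y <> x -> u x - u y <= c * d x y) ->
  (global_slope d u x <= c%:E)%E.
Proof.
move=> c0 h; apply: ge_ereal_sup => z [->|[y /= hy <-]]; first by rewrite lee_fin.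
rewrite lee_fin ler_pdivrMr; last exact: d_gt0.
rewrite ge_max h //=; by apply: mulr_ge0 => //; exact: d_ge0.
Qed.

Lemma gs_elem u x y c : (global_slope d u x <= c%:E)%E -> y <> x ->
  u x - u y <= c * d x y.
Proof.
move=> h hy.
have : ((Num.max (u x - u y) 0 / d x y)%:E <= c%:E)%E.
  apply: le_trans h; apply: ereal_sup_ubound; right; by exists y.
rewrite lee_fin ler_pdivrMr; last exact: d_gt0.
by apply: le_trans; rewrite le_max lexx.
Qed.

Lemma sol_eq lam l u x : ((lam * u x)%:E + global_slope d u x)%E = (l x)%:E ->
  global_slope d u x = (l x - lam * u x)%:E.
Proof.
move=> h; have := gs_ge0 u x.
case E: (global_slope d u x) => [g| |] //= _; last by rewrite E in h.
by move: h; rewrite E -EFinD => -[<-]; congr EFin; ring.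
Qed.

Lemma einf0P (f : T -> R) : einf f = 0%E <-> (forall y, 0 <= f y) /\ (forall e, 0 < e -> exists y, f y < e).
Proof.
split.
  move=> h; split.
    move=> y; have : (einf f <= (f y)%:E)%E by apply: ereal_inf_lbound; exists y.
    by rewrite h lee_fin.
  move=> e e0; have : (einf f < e%:E)%E by rewrite h lte_fin.
  by case/ereal_inf_lt => _ [y _ <-]; rewrite lte_fin => ?; exists y.
move=> [h1 h2]; apply/eqP; rewrite eq_le; apply/andP; split.
  apply/lee_addgt0Pr => e e0; rewrite add0e.
  have [y hy] := h2 e e0; apply: (@le_trans _ _ (f y)%:E); last by rewrite lee_fin ltW.
  apply: ereal_inf_lbound; by exists y.
by apply: le_ereal_inf_tmp => _ [y _ <-]; rewrite lee_fin.
Qed.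

Definition subsol lam (l z : T -> R) :=
  (forall x, lam * z x <= l x) /\ (forall x y, z x - z y <= (l x - lam * z x) * d x y).
Definition good lam (l z : T -> R) :=
  [/\ lsc d z, (forall y, 0 <= z y), (forall e, 0 < e -> exists y, z y < e) & subsol lam l z].

Lemma sol_good lam l u : is_solution d lam l u -> good lam l u.
Proof.
move=> [hl [hi he]]; have [h1 h2] := (einf0P u).1 hi.
have hx x := sol_eq (he x).
split => //; split.
  move=> x; have := gs_ge0 u x; rewrite hx lee_fin; lra.
move=> x y; have [->|hyx] := pselect (y = x); first by rewrite d_xx mulr0 subrr.
by apply: gs_elem => //; rewrite hx.
Qed.

Lemma good_bound D lam l z : (forall x y, d x y <= D) -> 0 <= lam -> good lam l z ->
  forall x, z x <= l x * D.
Proof.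
move=> hD lam0 [_ z0 zs [s1 s2]] x; apply/ler_addgt0Pr => e e0.
have [y hy] := zs e e0.
have := s2 x y; have := hD x y; have := d_ge0 x y; have := s1 x.
have := z0 x; have := z0 y => zy0 zx0 sx d0 dD sxy.
have p1 : 0 <= (l x - lam * z x) * (D - d x y) by apply: mulr_ge0; lra.
have p2 : 0 <= lam * z x * D.
  by apply: mulr_ge0; [exact: mulr_ge0| have := d_ge0 x y; lra].
nra.
Qed.

Lemma lsc_max f h : lsc d f -> lsc d h -> lsc d (fun x => Num.max (f x) (h x)).
Proof.
move=> hf hh x e e0; have [a a0 ha] := hf x e e0; have [b b0 hb] := hh x e e0.
exists (Num.min a b); first by rewrite lt_min a0 b0.
move=> y; rewrite lt_min => /andP[ya yb].
have := ha y ya; have := hb y yb.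
rewrite /=; have [fh|hf'] := leP (f x) (h x).
  move=> h1 h2; rewrite lt_max; apply/orP; right; lra.
move=> h1 h2; rewrite lt_max; apply/orP; left; lra.
Qed.

End Basics.

Section Perron.
Variables (R : realType) (T : Type) (d : T -> T -> R) (D lam : R) (l u : T -> R).
Hypothesis dm : is_metric d.
Hypothesis hD : forall x y, d x y <= D.
Hypothesis lam0 : 0 <= lam.
Hypothesis lscl : lsc d l.
Hypothesis linf : einf l = 0%E.
Hypothesis hu : is_perron_solution d lam l u.

Let S z := good d lam l z.
Let U x := sup [set z x | z in S].

Let uS : S u. Proof. exact: sol_good hu.1. Qed.

Let hasU x : has_sup [set z x | z in S].
Proof.
split; first by exists (u x), u.
exists (l x * D) => _ [z zS <-]; exact (good_bound dm hD lam0 zS x).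
Qed.

Let le_U z x : S z -> z x <= U x.
Proof. by move=> zS; apply: sup_upper_bound (hasU x) _ _; exists z. Qed.

Let U_le x : U x <= l x * D.
Proof.
apply: ge_sup; first by exists (u x), u.
move=> _ [z zS <-]; exact (good_bound dm hD lam0 zS x).
Qed.

Let U_adh x e : 0 < e -> exists2 z, S z & U x - e < z x.
Proof. by move=> e0; have [_ [z zS <-] h] := sup_adherent e0 (hasU x); exists z. Qed.

Let U_ge0 x : 0 <= U x.
Proof. have [_ h _ _] := uS; exact: le_trans (h x) (le_U x uS). Qed.

Let D_ge0 (x : T) : 0 <= D.
Proof. exact: le_trans (d_ge0 dm x x) (hD x x). Qed.

Let U_good : S U.
Proof.
split.
- move=> x e e0; have [z zS hz] := @U_adh x (e/2) ltac:(lra).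
  have [zl _ _ _] := zS; have [a a0 ha] := zl x (e/2) ltac:(lra).
  exists a => // y hy; have := ha y hy; have := le_U y zS; lra.
- exact: U_ge0.
- move=> e e0.
  have [linf0 linfs] := iffLR (einf0P l) linf.
  have [y0 _] := linfs 1 ltr01.
  have D0 := D_ge0 y0.
  have [y hy] := linfs (e / (D + 1)) ltac:(apply: divr_gt0; lra).
  exists y; apply: le_lt_trans (U_le y) _.
  have h1 : l y * (D + 1) < e by rewrite -ltr_pdivlMr; lra.
  have := linf0 y; nra.
- have hh : 0 <= lam := lam0.
  split.
  + move=> x; apply/ler_addgt0Pr => e e0.
    have l1 : 0 < lam + 1 by lra.
    have [z zS hz] := @U_adh x (e / (lam + 1)) ltac:(apply: divr_gt0; lra).
    have [_ _ _ [z1 _]] := zS.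
    set e' := e / (lam + 1) in hz.
    have he : e' * (lam + 1) = e by rewrite /e' mulfVK //; lra.
    have e'0 : 0 < e' by rewrite /e'; apply: divr_gt0; lra.
    have p : 0 <= lam * (z x - U x + e') by apply: mulr_ge0; lra.
    have := z1 x; nra.
  + move=> x y; apply/ler_addgt0Pr => e e0.
    have D0 := D_ge0 x.
    have l1 : 0 < lam * D + 1 by nra.
    have [z zS hz] := @U_adh x (e / (lam * D + 1)) ltac:(apply: divr_gt0; lra).
    have [_ _ _ [z1 z2]] := zS.
    set e' := e / (lam * D + 1) in hz.
    have he : e' * (lam * D + 1) = e by rewrite /e' mulfVK //; lra.
    have e'0 : 0 < e' by rewrite /e'; apply: divr_gt0; lra.
    have hzy := le_U y zS.
    have := z2 x y; have := hD x y; have := d_ge0 dm x y => d0 dD h2.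
    have A : l x - lam * z x <= l x - lam * U x + lam * e' by nra.
    have B : (l x - lam * z x) * d x y <= (l x - lam * U x + lam * e') * d x y.
      by apply: ler_wpM2r.
    have C : lam * e' * d x y <= lam * e' * D.
      by apply: ler_wpM2l => //; nra.
    nra.
Qed.

Let no_raise x0 g : 0 <= g -> g + lam * U x0 < l x0 ->
  (forall y, U x0 - U y <= g * d x0 y) -> False.
Proof.
move=> g0 hlt hg; have hh : 0 <= lam := lam0.
have [Ulsc U0 Us [Us1 Us2]] := U_good.
have [_ u0 _ _] := uS.
have [Ux0|Ux0] := leP (U x0) 0.
  have ux0 : u x0 = 0 by have := le_U x0 uS; have := u0 x0; lra.
  have Ux00 : U x0 = 0 by have := U0 x0; lra.
  have hs := sol_eq (hu.1.2.2 x0).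
  have : (global_slope d u x0 <= 0%:E)%E.
    apply: (@gs_le _ _ _ dm u x0 0) => // y _; rewrite ux0 mul0r; have := u0 y; lra.
  rewrite hs lee_fin ux0 mulr0 subr0 => hl.
  move: hlt; rewrite Ux00 mulr0; lra.
pose eta := (l x0 - g - lam * U x0) / 3.
have eta0 : 0 < eta by rewrite /eta; apply: divr_gt0; lra.
have eta3 : eta * 3 = l x0 - g - lam * U x0 by rewrite /eta mulfVK //.
pose L := g + eta.
have L0 : 0 <= L by rewrite /L; lra.
have [r1 r10 hr1] := lscl x0 eta0.
have [r2 r20 hr2] := Ulsc x0 (U x0 / 2) ltac:(apply: divr_gt0; lra).
pose r := Num.min r1 r2.
have r0 : 0 < r by rewrite /r lt_min r10 r20.
have rr1 : r <= r1 by rewrite /r ge_min lexx.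
have rr2 : r <= r2 by rewrite /r ge_min lexx orbT.
have l1 : 0 < lam + 1 by lra.
pose del := Num.min (eta / (lam + 1)) (r * eta).
have del0 : 0 < del.
  by rewrite /del lt_min; apply/andP; split; [apply: divr_gt0 | apply: mulr_gt0].
have del1 : lam * del <= eta.
  have : del <= eta / (lam + 1) by rewrite /del ge_min lexx.
  rewrite ler_pdivlMr // => h; nra.
have del2 : del <= r * eta by rewrite /del ge_min lexx orbT.
pose phi := fun y => U x0 + del - L * d x0 y.
pose Z := fun y => Num.max (U y) (phi y).
have K y : U y < phi y -> d x0 y < r.
  rewrite /phi /L => h; have := hg y; have := d_ge0 dm x0 y => dd hgy.
  have : eta * d x0 y < r * eta by nra.
  nra.
have K2 y : U y < phi y -> L <= l y - lam * phi y.
  move=> h; have := hr1 y (lt_le_trans (K y h) rr1) => hl.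
  have p : 0 <= lam * (U x0 + del - phi y).
    apply: mulr_ge0 => //; rewrite /phi; have := d_ge0 dm x0 y => dd; nra.
  rewrite /L; nra.
have ZS : S Z.
  split.
  - apply: lsc_max => // x e e0.
    have L1 : 0 < L + 1 by lra.
    exists (e / (L + 1)); first by apply: divr_gt0.
    move=> y hy; rewrite /phi.
    have he : e / (L + 1) * (L + 1) = e by rewrite mulfVK //; lra.
    have := d_tri dm x0 x y => t.
    have : L * d x y <= L * (e / (L + 1)) by apply: ler_wpM2l => //; exact: ltW.
    nra.
  - by move=> y; rewrite /Z le_max U0.
  - move=> e e0.
    have [y hy] := Us (Num.min e (U x0 / 2)) ltac:(rewrite lt_min e0 /=; apply: divr_gt0; lra).
    exists y; rewrite /Z.
    move: hy; rewrite lt_min => /andP[hy1 hy2].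
    have [h|h] := ltP (U y) (phi y); last by [].
    have := hr2 y (lt_le_trans (K y h) rr2); lra.
  - split.
    + move=> x; rewrite /Z.
      have [h|h] := ltP (U x) (phi x); last exact: Us1.
      have := K2 x h; lra.
    + move=> x y; rewrite /Z.
      have [h|h] := ltP (U x) (phi x).
        have := K2 x h => k2.
        have hy : phi y <= Num.max (U y) (phi y) by rewrite le_max lexx orbT.
        have := d_tri dm x0 x y => t.
        have := d_ge0 dm x y => dxy.
        have p1 : 0 <= L * (d x y - (d x0 y - d x0 x)) by apply: mulr_ge0; lra.
        have p2 : 0 <= (l x - lam * phi x - L) * d x y by apply: mulr_ge0; lra.
        rewrite /phi in hy p2 k2 *; nra.
      have hy : U y <= Num.max (U y) (phi y) by rewrite le_max lexx.
      have := Us2 x y; lra.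
have := le_U x0 ZS; rewrite /Z.
have : phi x0 <= Num.max (U x0) (phi x0) by rewrite le_max lexx orbT.
rewrite /phi d_xx // mulr0 subr0; lra.
Qed.

Let U_sol : is_solution d lam l U.
Proof.
have [Ulsc U0 Us [Us1 Us2]] := U_good.
have eqG x : global_slope d U x = (l x - lam * U x)%:E.
  apply/eqP; rewrite eq_le; apply/andP; split.
    apply: (@gs_le _ _ _ dm U x (l x - lam * U x)); first by have := Us1 x; have := lam0; lra.
    by move=> y _; exact: Us2.
  rewrite leNgt; apply/negP => hlt.
  have G0 := gs_ge0 d U x.
  case E: (global_slope d U x) hlt G0 => [g| |] //; rewrite lte_fin lee_fin => hlt g0.
  apply: (@no_raise x g g0); first lra.
  move=> y; have [->|hyx] := pselect (y = x); first by rewrite d_xx // mulr0 subrr.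
  have hE : (global_slope d U x <= g%:E)%E by rewrite E.
  exact: (@gs_elem _ _ _ dm U x y g hE hyx).
split => //; split; first by apply/einf0P.
by move=> x; rewrite eqG -EFinD; congr EFin; ring.
Qed.

Lemma perron_le w : good d lam l w -> forall x, w x <= u x.
Proof. move=> wS x; exact: le_trans (le_U x wS) (hu.2 U U_sol x). Qed.

End Perron.

Unset Implicit Arguments.

Theorem lemma5p3 (R : realType) (T : Type) (d : T -> T -> R)
  (lam : R) (l k u v : T -> R) :
  is_metric d ->
  (diam d < +oo)%E ->
  0 <= lam ->
  (forall x, 0 <= l x) -> (forall x, 0 <= k x) ->
  lsc d l -> lsc d k ->
  einf l = 0%E -> einf k = 0%E ->
  is_perron_solution d lam l u ->
  is_perron_solution d lam k v ->
  forall rho : R, 0 < rho ->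
  forall x : T,
    ((v x - u x)%R%:E <=
      (rho%:E + sup_norm (fun y => (k y - l y)%R)) * diam d
      + sup_norm (fun y => (k y - l y)%R) * (u x / rho)%R%:E)%E.
Proof.
move=> dm hdiam lam0 l0 k0 lscl lsck linf kinf hu hv rho rho0 x.
have hu' := sol_good dm hu.1; have hv' := sol_good dm hv.1.
have [ul u0 us [u1 u2]] := hu'; have [vl v0 vs [v1 v2]] := hv'.
have Dge : ((d x x)%:E <= diam d)%E by apply: ereal_sup_ubound; exists (x, x).
have hD' y z : ((d y z)%:E <= diam d)%E by apply: ereal_sup_ubound; exists (y, z).
rewrite d_xx // in Dge.
case Ed: (diam d) hdiam Dge hD' => [D| |] // _; rewrite lee_fin => D0 hD'.
have hD y z : d y z <= D by rewrite -lee_fin hD'.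
have Mge : ((`|k x - l x|)%:E <= sup_norm (fun y => (k y - l y)%R))%E.
  by apply: ereal_sup_ubound; exists x.
have hm' y : ((`|k y - l y|)%:E <= sup_norm (fun y => (k y - l y)%R))%E.
  by apply: ereal_sup_ubound; exists y.
case Em: (sup_norm (fun y => (k y - l y)%R)) Mge hm' => [m| |] //; last first.
  move=> _ _; have [D00|Dp] := leP D 0.
    have DD : D = 0 by lra.
    have onept y : y = x.
      have [_ [hd _]] := dm; apply/hd; have := hD y x; have := d_ge0 dm y x; lra.
    have ux : u x = 0.
      apply/eqP; rewrite eq_le u0 andbT; apply/ler_addgt0Pr => e e0.
      have [y hy] := us e e0; move: hy; rewrite (onept y) add0r => ?; exact: ltW.
    have vx : v x = 0.
      apply/eqP; rewrite eq_le v0 andbT; apply/ler_addgt0Pr => e e0.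
      have [y hy] := vs e e0; move: hy; rewrite (onept y) add0r => ?; exact: ltW.
    by rewrite ux vx DD subrr mul0r !mule0 adde0.
  rewrite addey // gt0_mulye ?lte_fin // addye ?leey //.
  have : (0 <= +oo * (u x / rho)%:E)%E.
    by apply: mule_ge0 => //; rewrite lee_fin; apply: divr_ge0 => //; exact: ltW.
  by case: (+oo * _)%E.
rewrite lee_fin => m0' hm'.
have hm y : `|k y - l y| <= m by rewrite -lee_fin hm'.
have m0 : 0 <= m by apply: le_trans m0'.
have E1 : ((rho%:E + m%:E) * D%:E + m%:E * (u x / rho)%:E =
  ((rho + m) * D + m * (u x / rho))%:E)%E by [].
rewrite E1 lee_fin.
have rm : 0 < rho + m by lra.
pose a := rho / (rho + m).
have a0 : 0 < a by rewrite /a; apply: divr_gt0.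
have arm : a * (rho + m) = rho by rewrite /a mulfVK //; lra.
pose w := fun y => Num.max (a * v y - rho * D) 0.
have vb y : v y <= k y * D := good_bound dm hD lam0 hv' y.
have hk y : 0 < a * v y - rho * D -> a * k y <= l y.
  move=> h; have := vb y => vby.
  have p1 : a * v y <= a * (k y * D) by apply: ler_wpM2l => //; exact: ltW.
  have p2 : 0 < a * k y - rho.
    rewrite ltNge; apply/negP => q.
    have : (a * k y - rho) * D <= 0 by apply: mulr_le0_ge0.
    nra.
  have p3 : rho * (rho + m) < a * k y * (rho + m) by rewrite ltr_pM2r //; lra.
  have ak : a * k y * (rho + m) = rho * k y by rewrite mulrAC arm mulrC.
  have p4 : rho + m < k y.
    have : rho * (rho + m) < rho * k y by rewrite -ak.
    by rewrite ltr_pM2l.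
  have p5 : k y - l y <= m by have := hm y; rewrite ler_norml; case/andP.
  rewrite -(ler_pM2r rm) ak; nra.
have wg : good d lam l w.
  split.
  - apply: (@lsc_max _ _ d (fun y => a * v y - rho * D) (fun _ => 0)).
      move=> y e e0; have [b b0 hb] := vl y (e / a) ltac:(apply: divr_gt0 => //).
      exists b => // z hz; have := hb z hz => h.
      have : a * (v y - e / a) < a * v z by rewrite ltr_pM2l.
      rewrite mulrBr mulrCA mulfV ?mulr1; [lra| exact: lt0r_neq0].
    by move=> y e e0; exists 1 => // z _; lra.
  - by move=> y; rewrite /w le_max lexx orbT.
  - move=> e e0; have [y hy] := vs (e / a) ltac:(apply: divr_gt0 => //).
    exists y; rewrite /w gt_max e0 andbT.
    have : a * v y < a * (e / a) by rewrite ltr_pM2l.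
    rewrite mulrCA mulfV ?mulr1; last exact: lt0r_neq0.
    have : 0 <= rho * D by apply: mulr_ge0 => //; exact: ltW.
    lra.
  - split.
    + move=> y; rewrite /w.
      have [h|h] := leP (a * v y - rho * D) 0; first by rewrite mulr0.
      have := hk y h => hky.
      have q1 : 0 <= lam * (rho * D) by apply: mulr_ge0 => //; apply: mulr_ge0 => //; exact: ltW.
      have q2 : a * (lam * v y) <= a * k y by rewrite ler_pM2l.
      nra.
    + move=> y z; rewrite /w.
      have hz : a * v z - rho * D <= Num.max (a * v z - rho * D) 0 by rewrite le_max lexx.
      have hz0 : 0 <= Num.max (a * v z - rho * D) 0 by rewrite le_max lexx orbT.
      have dd := d_ge0 dm y z.
      have [h|h] := leP (a * v y - rho * D) 0.
        have := l0 y => ly; have : 0 <= l y * d y z by apply: mulr_ge0.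
        lra.
      have := hk y h => hky.
      have q1 : 0 <= lam * (rho * D) by apply: mulr_ge0 => //; apply: mulr_ge0 => //; exact: ltW.
      have q2 : a * (v y - v z) <= a * ((k y - lam * v y) * d y z) by rewrite ler_pM2l.
      have q3 : a * (k y - lam * v y) <= l y - lam * (a * v y - rho * D) by nra.
      have q4 : a * (k y - lam * v y) * d y z <= (l y - lam * (a * v y - rho * D)) * d y z.
        by apply: ler_wpM2r.
      nra.
have := perron_le dm hD lam0 lscl linf hu wg x; rewrite /w => hw.
have hax : a * v x - rho * D <= u x by apply: le_trans hw; rewrite le_max lexx.
have h1 : rho * v x <= (u x + rho * D) * (rho + m).
  have av : a * v x * (rho + m) = rho * v x by rewrite mulrAC arm mulrC.
  rewrite -av; apply: ler_wpM2r => //; lra.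
have t1 : u x / rho * rho = u x by rewrite mulfVK //; lra.
rewrite -(ler_pM2r rho0); nra.
Qed.
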